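(* Let $(X,\alpha,T)$ be a dynamical system with $T=\mathbb{Z}$ or $T=\mathbb{R}$ acting by homeomorphisms on a compact metrizable space $X$. If $f\in E$ and $g\in E^+\setminus\{\alpha^t: t\in T, t\ge0\}$, then $fg\in E^+$.
   Context: $\alpha^t$ are homeomorphisms with $\alpha^{s+t}=\alpha^s\circ\alpha^t$, $\alpha^0=\mathrm{id}$. $E$ is the closure of $\{\alpha^t:t\in T\}$ in $X^X$ (maps $X\to X$, pointwise convergence topology, composition as product) and $E^+$ the closure of $\{\alpha^t:t\ge0\}$. *)

(* Defs.v *)
From HB Require Import structures.
From mathcomp Require Import all_boot all_order all_algebra.
From mathcomp Require Import all_classical all_reals all_analysis.
Set Implicit Arguments. Unset Strict Implicit. Unset Printing Implicit Defensive.
Import Order.TTheory GRing.Theory Num.Theory.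
Import numFieldNormedType.Exports.
Local Open Scope classical_set_scope.
Local Open Scope ring_scope.

(* Group-action axioms for an action of the additive group T on X by
   homeomorphisms: alpha^0 = id, alpha^(s+t) = alpha^s o alpha^t, and each
   alpha^t continuous (hence a homeomorphism with inverse alpha^(-t)). *)
Definition group_action_homeo (T : zmodType) (X : topologicalType)
  (alpha : T -> X -> X) : Prop :=
  [/\ alpha 0 = id,
      (forall s t, alpha (s + t) = alpha s \o alpha t) &
      (forall t, continuous (alpha t))].

Definition Zflow (X : topologicalType) (alpha : int -> X -> X) : Prop :=
  group_action_homeo alpha.

Definition Rflow (R : realType) (X : topologicalType) (alpha : R -> X -> X) : Prop :=
  group_action_homeo alpha /\
  continuous (fun p : R * X => alpha p.1 p.2).

Definition Ecl (T : Type) (X : topologicalType) (alpha : T -> X -> X) :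
  set (X -> X) :=
  @closure {ptws X -> X} [set alpha t | t in [set: T]].

Definition Epos (T : numDomainType) (X : topologicalType)
  (alpha : T -> X -> X) : set (X -> X) :=
  @closure {ptws X -> X} [set alpha t | t in [set t : T | 0 <= t]].

(* Main.v *)
Require Import Defs.
From HB Require Import structures.
From mathcomp Require Import all_boot all_order all_algebra.
From mathcomp Require Import all_classical all_reals all_analysis.
From mathcomp Require Import zify.
Import Order.TTheory GRing.Theory Num.Theory.
Import numFieldNormedType.Exports.
Local Open Scope classical_set_scope.
Local Open Scope ring_scope.

Lemma ptws_continuous {W X : topologicalType} : forall (h : W -> {ptws X -> X}),
  (forall x, continuous (fun w => h w x)) -> continuous h.
Proof.
move=> h hc w; apply/cvg_sup => x.
exact: (@continuous_comp_initial _ _ _ (fun f : X -> X => f x) h (hc x)).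
Qed.

Lemma closure_cont {W V : topologicalType} {h : W -> V} {A : set W} {p} :
  continuous h -> closure A p -> closure (h @` A) (h p).
Proof.
move=> hc cl B /hc hB; have [q [Aq Bq]] := cl _ hB.
by exists (h q); split => //; exists q.
Qed.

Lemma generic (T : realDomainType) (X : topologicalType) (alpha : T -> X -> X)
  (f g : X -> X) : group_action_homeo alpha ->
  Ecl alpha f ->
  (forall N, 0 <= N -> @closure {ptws X -> X} [set alpha t | t in [set t | N <= t]] g) ->
  Epos alpha (f \o g).
Proof.
case=> a0 aD ac Ef Hg.
have cR : continuous (fun h : {ptws X -> X} => (h \o g : {ptws X -> X})).
  apply: ptws_continuous => x /=.
  exact: (@proj_continuous X (fun _ => X) (g x)).
have cL s : continuous (fun h : {ptws X -> X} => (alpha s \o h : {ptws X -> X})).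
  apply: ptws_continuous => x /= h.
  apply: continuous_comp; first exact: (@proj_continuous X (fun _ => X) x).
  exact: ac.
have step s : Epos alpha (alpha s \o g).
  have H := closure_cont (cL s) (Hg `|s| (normr_ge0 s)).
  have : @closure {ptws X -> X} [set alpha t | t in [set t : T | 0 <= t]] `<=` Epos alpha by [].
  apply; apply: (closureS _ H).
  move=> _ [_ [t /= Nt <-] <-]; exists (s + t); last by rewrite aD.
  rewrite /= -(addrN s) lerD2l (le_trans _ Nt) // -normrN; exact: ler_norm.
have := closure_cont cR Ef.
have E1 : Epos alpha = @closure {ptws X -> X} (Epos alpha).
  apply/(@closure_id {ptws X -> X} (Epos alpha)); exact: closed_closure.
rewrite E1; apply: closureS; move=> _ [_ [s _ <-] <-]; exact: step.
Qed.

Lemma tail (T : realDomainType) (X : topologicalType) (alpha : T -> X -> X) g :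
  (forall N, 0 <= N ->
     closed (@setT {ptws X -> X} `&` [set alpha t | t in [set t | 0 <= t <= N]])) ->
  Epos alpha g -> ~ (exists2 t, 0 <= t & alpha t = g) ->
  forall N, 0 <= N -> @closure {ptws X -> X} [set alpha t | t in [set t | N <= t]] g.
Proof.
move=> cl Eg ng N N0.
have E : [set t : T | 0 <= t] = [set t | 0 <= t <= N] `|` [set t | N <= t].
  apply/seteqP; split => t /=.
  - move=> t0; case: (leP t N) => tN; [by left; apply/andP | right; exact: ltW].
  - by case=> [/andP[]|] //; exact: le_trans.
move: Eg; rewrite /Epos E image_setU closureU => -[|//].
have := cl N N0; rewrite setTI => /(@closure_id {ptws X -> X} _) <-.
by case=> t /andP[t0 _] tg; exfalso; apply: ng; exists t.
Qed.

Lemma ptws_hausdorff (X : topologicalType) : hausdorff_space X ->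
  hausdorff_space {ptws X -> X}.
Proof. by move=> hX; apply: (@hausdorff_product X (fun _ => X)) => _. Qed.

Lemma int_fin (N : int) : finite_set [set t : int | 0 <= t <= N].
Proof.
apply: (@sub_finite_set _ _ ((fun n : nat => n%:Z) @` `I_(absz N).+1)); last first.
  exact/finite_image/finite_II.
move=> t /= /andP[t0 tN]; exists (absz t); last by rewrite gez0_abs.
rewrite /= ltnS; lia.
Qed.

Theorem lemma3p5 (R : realType) :
  (forall (X : pseudoMetricType R) (alpha : int -> X -> X),
     hausdorff_space X -> compact [set: X] -> Zflow alpha ->
     forall f g : X -> X,
       Ecl alpha f ->
       Epos alpha g -> ~ (exists2 t : int, 0 <= t & alpha t = g) ->
       Epos alpha (f \o g)) /\
  (forall (X : pseudoMetricType R) (alpha : R -> X -> X),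
     hausdorff_space X -> compact [set: X] -> Rflow alpha ->
     forall f g : X -> X,
       Ecl alpha f ->
       Epos alpha g -> ~ (exists2 t : R, 0 <= t & alpha t = g) ->
       Epos alpha (f \o g)).
Proof.
split.
- move=> X alpha hX _ ga f g Ef Eg ng; apply: generic => //.
  apply: tail => // N N0; rewrite setTI.
  apply: compact_closed; first exact: ptws_hausdorff.
  exact/finite_compact/finite_image/int_fin.
- move=> X alpha hX _ [ga jc] f g Ef Eg ng; apply: generic => //.
  apply: tail => // N N0; rewrite setTI.
  apply: compact_closed; first exact: ptws_hausdorff.
  have -> : [set t : R | 0 <= t <= N] = `[0, N]%classic.
    by apply/seteqP; split => t /=; rewrite in_itv.
  apply: continuous_compact; last exact: segment_compact.
  apply: continuous_subspaceT; apply: ptws_continuous => x t.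
  apply: (@continuous2_cvg _ _ _ _ _ _ (fun w => w) (fun _ => x) alpha t x).
  - exact: (jc (t, x)).
  - exact: cvg_id.
  - exact: cvg_cst.
Qed.
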